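(* Let $\delta\in(0,1)$, $\ell\in\mathbb N$, let $\mu$ be a distribution over $\{0,1\}^n$ and $\xi$ a $(\delta,\ell)$-robust detailing of $\mu$ with respect to a finite set $A$. Let $B$ be a finite set with $|B|\le\ell$, let $\xi'$ be a refinement of $\xi$ with respect to $B$, let $\eta=\xi'|_{2,3}$ (a distribution over $A\times B$), and let $\xi_{\langle\eta\rangle}$ be the flat refinement of $\xi$ with respect to $\eta$. Let $\Lambda'$ and $\Lambda_{\langle B\rangle}$ be the type distributions of $\xi'$ and $\xi_{\langle\eta\rangle}$ respectively (as detailings with respect to $A\times B$). Then $d^\eta_{EM}(\Lambda',\Lambda_{\langle B\rangle})\le\sqrt\delta$.
   Context: A detailing of $\mu$ w.r.t. a finite set $C$ is a distribution $\zeta$ over $\{0,1\}^n\times C$ with first marginal $\mu$; its type of $i\in[n]$ is $t_i\in[0,1]^C$, $t_i(c)=\Pr_{x\sim\zeta|_1^{2:c}}[x_i=1]$ when $\zeta|_2(c)>0$ (conditioning on second coordinate $c$) and $0$ otherwise; its type distribution is the law of $t_{\mathbf i}$, $\mathbf i$ uniform in $[n]$. Its index is $\mathrm{Ind}(\zeta)=\mathbb{E}_{i\sim[n]}\mathbb{E}_{c\sim\zeta|_2}[t_i(c)^2]$. A refinement of $\xi$ (over $\{0,1\}^n\times A$) with respect to $B$ is a distribution $\xi'$ over $\{0,1\}^n\times A\times B$ with $\xi'|_{1,2}=\xi$, viewed as a detailing of $\mu$ w.r.t. $A\times B$. $\xi$ is $(\delta,\ell)$-robust if $\mathrm{Ind}(\xi')\le\mathrm{Ind}(\xi)+\delta$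 for every finite $B$ with $|B|\le\ell$ and every refinement $\xi'$ of $\xi$ w.r.t. $B$. For a distribution $\eta$ on $A\times B$ with $\eta|_1=\xi|_2$, the flat refinement is $\xi_{\langle\eta\rangle}(x,a,b)=\xi(x,a)\cdot\eta|_2^{1:a}(b)$. For a distribution $\eta$ on a finite set $C$, $d^\eta_{\ell_1}(x,y)=\sum_c\eta(c)|x_c-y_c|$ on $[0,1]^C$, and $d^\eta_{EM}$ is the Earth Mover distance over it. *)

(* Defs.v *)
From HB Require Import structures.
From mathcomp Require Import all_boot all_order all_algebra.
From mathcomp Require Import boolp classical_sets reals.
Set Implicit Arguments. Unset Strict Implicit. Unset Printing Implicit Defensive.
Import Order.TTheory GRing.Theory Num.Theory.
Local Open Scope ring_scope.

Definition cube (n : nat) := {ffun 'I_n -> bool}.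

Section Defs.
Variable R : realType.

Definition is_dist (T : finType) (p : T -> R) :=
  (forall t, 0 <= p t) /\ \sum_t p t = 1.

Definition marg1 n (C : finType) (z : cube n * C -> R) (x : cube n) : R :=
  \sum_c z (x, c).
Definition marg2 n (C : finType) (z : cube n * C -> R) (c : C) : R :=
  \sum_(x : cube n) z (x, c).

Definition is_detailing n (C : finType) (mu : cube n -> R) (z : cube n * C -> R) :=
  is_dist z /\ forall x, marg1 z x = mu x.

(* type of coordinate i : t_i(c) = Pr_{x ~ z | c}[x_i = 1], or 0 if z|_2(c) = 0 *)
Definition typ n (C : finType) (z : cube n * C -> R) (i : 'I_n) : {ffun C -> R} :=
  [ffun c => if marg2 z c == 0 then 0
             else (\sum_(x : cube n) (if x i then z (x, c) else 0)) / marg2 z c].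

Definition Ind n (C : finType) (z : cube n * C -> R) : R :=
  (n%:R)^-1 * \sum_(i < n) \sum_c marg2 z c * (typ z i c) ^+ 2.

Definition typedist n (C : finType) (z : cube n * C -> R) (t : {ffun C -> R}) : R :=
  (#|[set i : 'I_n | typ z i == t]|)%:R / n%:R.

Definition is_refinement n (A B : finType) (xi : cube n * A -> R)
    (xi' : cube n * (A * B) -> R) :=
  is_dist xi' /\ forall x a, \sum_b xi' (x, (a, b)) = xi (x, a).

Definition robust n (A : finType) (xi : cube n * A -> R) (delta : R) (l : nat) :=
  forall (B : finType), (#|B| <= l)%N ->
  forall xi' : cube n * (A * B) -> R, is_refinement xi xi' ->
    Ind xi' <= Ind xi + delta.

Definition marg23 n (A B : finType) (xi' : cube n * (A * B) -> R) (ab : A * B) : R :=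
  \sum_(x : cube n) xi' (x, ab).

Definition cond2 (A B : finType) (eta : A * B -> R) (a : A) (b : B) : R :=
  let m := \sum_b' eta (a, b') in if m == 0 then 0 else eta (a, b) / m.

Definition flat n (A B : finType) (xi : cube n * A -> R) (eta : A * B -> R)
    (p : cube n * (A * B)) : R :=
  xi (p.1, p.2.1) * cond2 eta p.2.1 p.2.2.

Definition dl1 (C : finType) (eta : C -> R) (x y : {ffun C -> R}) : R :=
  \sum_c eta c * `|x c - y c|.

(* couplings of two finitely supported distributions (given by mass functions
   m1, m2), represented as finite lists of weighted pairs *)
Definition is_coupling (T : eqType) (m1 m2 : T -> R) (s : seq (R * (T * T))) :=
  [/\ forall p, p \in s -> 0 <= p.1,
      forall x, \sum_(p <- s | p.2.1 == x) p.1 = m1 x &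
      forall y, \sum_(p <- s | p.2.2 == y) p.1 = m2 y].

Definition dEM (T : eqType) (d : T -> T -> R) (m1 m2 : T -> R) : R :=
  inf [set r : R | exists s, is_coupling m1 m2 s /\
                   r = \sum_(p <- s) p.1 * d p.2.1 p.2.2].

End Defs.

(* Main.v *)
Require Import Defs.
From HB Require Import structures.
From mathcomp Require Import all_boot all_order all_algebra.
From mathcomp Require Import boolp classical_sets reals.
From mathcomp Require Import ring lra.
Import Order.TTheory GRing.Theory Num.Theory.
Local Open Scope ring_scope.
Set Implicit Arguments. Unset Strict Implicit.

Section Helpers.
Variable R : realType.

Lemma num_le_marg n (C : finType) (z : cube n * C -> R) i c :
  (forall p, 0 <= z p) ->
  \sum_(x : cube n) (if x i then z (x, c) else 0) <= marg2 z c.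
Proof. by move=> z0; apply: ler_sum => x _; case: (x i). Qed.

Lemma mt_typ n (C : finType) (z : cube n * C -> R) i c :
  (forall p, 0 <= z p) ->
  marg2 z c * typ z i c = \sum_(x : cube n) (if x i then z (x, c) else 0).
Proof.
move=> z0; rewrite /typ ffunE; case: eqP => [H0|H].
  rewrite H0 mul0r; apply/esym/le_anti/andP; split.
    by apply: le_trans (num_le_marg i c z0) _; rewrite H0.
  by apply: sumr_ge0 => x _; case: (x i).
by rewrite mulrC divfK //; apply/eqP.
Qed.

Lemma sum_pair (A B : finType) (F : A * B -> R) :
  \sum_c F c = \sum_a \sum_b F (a, b).
Proof. by rewrite pair_big; apply: eq_bigr => [[]]. Qed.

End Helpers.

Theorem lemma5p4 (R : realType) (n : nat) (A B : finType) (delta : R) (l : nat)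
    (mu : cube n -> R) (xi : cube n * A -> R) (xi' : cube n * (A * B) -> R) :
  0 < delta < 1 ->
  is_dist mu ->
  is_detailing mu xi ->
  robust xi delta l ->
  (#|B| <= l)%N ->
  is_refinement xi xi' ->
  dEM (dl1 (marg23 xi')) (typedist xi') (typedist (flat xi (marg23 xi')))
    <= Num.sqrt delta.
Proof.
move=> /andP[d0 d1] _ _ hrob hB href.
have hI := hrob B hB xi' href.
case: href => [[xi'0 xi'1] xiref].
have xi0 : forall p, 0 <= xi p.
  by move=> [x a]; rewrite -xiref; apply: sumr_ge0.
set eta := marg23 xi'.
have eta0 : forall c, 0 <= eta c by move=> c; apply: sumr_ge0.
have etaS : forall a, \sum_b eta (a, b) = marg2 xi a.
  by move=> a; rewrite /eta /marg23 /marg2 exchange_big; apply: eq_bigr => x _.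
have eta1 : \sum_c eta c = 1.
  rewrite /eta /marg23 exchange_big -xi'1 pair_big.
  by apply: eq_bigr => [[x c]] _.
have keyt : forall i a, \sum_b eta (a, b) * typ xi' i (a, b)
                        = marg2 xi a * typ xi i a.
  move=> i a; rewrite (mt_typ i a xi0).
  under eq_bigr => b _ do rewrite [eta _](_ : _ = marg2 xi' (a, b)) // (mt_typ i (a, b) xi'0).
  rewrite exchange_big; apply: eq_bigr => x _; case: (x i) => //.
  by rewrite big1.
have tflat : forall i a b,
    eta (a, b) * `|typ xi' i (a, b) - typ (flat xi eta) i (a, b)|
    = eta (a, b) * `|typ xi' i (a, b) - typ xi i a|.
  move=> i a b; case: (eqVneq (eta (a, b)) 0) => [->|ne]; first by rewrite !mul0r.
  have epos : 0 < eta (a, b) by rewrite lt0r ne eta0.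
  have mge : eta (a, b) <= marg2 xi a.
    by rewrite -etaS (bigD1 b) //= lerDl; apply: sumr_ge0 => *.
  have m0 : marg2 xi a != 0 by rewrite gt_eqF // (lt_le_trans epos mge).
  have hc : cond2 eta a b = eta (a, b) / marg2 xi a by rewrite /cond2 etaS (negbTE m0).
  have hmf : marg2 (flat xi eta) (a, b) = eta (a, b).
    rewrite /marg2 /flat /= hc -mulr_suml -/(marg2 xi a).
    by rewrite mulrC divfK.
  congr (_ * `|_ - _|).
  rewrite /typ !ffunE hmf (negbTE ne) (negbTE m0).
  rewrite /flat /= hc.
  rewrite (_ : \sum_(x : cube n) (if x i then xi (x, a) * (eta (a, b) / marg2 xi a) else 0) = (\sum_(x : cube n) (if x i then xi (x, a) else 0)) * (eta (a, b) / marg2 xi a)).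
    field; by rewrite m0 ne.
  rewrite [RHS]big_distrl /=. apply: eq_bigr => x _. case: (x i) => //; by rewrite ?mul0r ?mulrA.
set u := fun (i : 'I_n) (c : A * B) => typ xi' i c - typ xi i c.1.
have hvar : forall i, \sum_c eta c * u i c ^+ 2
   = \sum_c marg2 xi' c * typ xi' i c ^+ 2 - \sum_a marg2 xi a * typ xi i a ^+ 2.
  move=> i; rewrite sum_pair [X in _ = X - _]sum_pair -sumrB; apply: eq_bigr => a _.
  rewrite /u /=.
  rewrite (eq_bigr (fun b => eta (a, b) * typ xi' i (a, b) ^+ 2 - (typ xi i a *+ 2) * (eta (a, b) * typ xi' i (a, b)) + typ xi i a ^+ 2 * eta (a, b))); last by move=> b _; ring.
  rewrite big_split sumrB /= -!mulr_sumr keyt etaS.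
  rewrite [X in _ = X - _](_ : _ = \sum_b eta (a, b) * typ xi' i (a, b) ^+ 2) //.
  ring.
have hX : \sum_i \sum_c eta c * u i c ^+ 2 <= delta * n%:R.
  case: (posnP n) => [n0|npos].
    by subst n; rewrite big_ord0 mulr0.
  have Np : 0 < (n%:R : R) by rewrite ltr0n.
  move: hI; rewrite /Ind -lerBlDl -mulrBr -sumrB.
  under eq_bigr => i _ do rewrite -hvar.
  by rewrite ler_pdivrMl // mulrC.
set s := Num.sqrt delta.
have s0 : 0 < s by rewrite sqrtr_gt0.
have ss : s ^+ 2 = delta by rewrite sqr_sqrtr // ltW.
pose sq := [seq ((n%:R : R)^-1, (typ xi' i, typ (flat xi eta) i)) | i <- enum 'I_n].
have cost : \sum_(p <- sq) p.1 * dl1 eta p.2.1 p.2.2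
            = n%:R^-1 * \sum_i \sum_c eta c * `|u i c|.
  rewrite big_map big_enum /= mulr_sumr; apply: eq_bigr => i _; congr (_ * _).
  rewrite /dl1 sum_pair [RHS]sum_pair; apply: eq_bigr => a _; apply: eq_bigr => b _.
  exact: tflat.
have coup : is_coupling (typedist xi') (typedist (flat xi eta)) sq.
  split.
  - by move=> p /mapP[i _ ->] /=; rewrite invr_ge0 ler0n.
  - move=> t; rewrite big_map big_enum_cond /= sumr_const /typedist.
    by rewrite mulr_natl cardsE.
  - move=> t; rewrite big_map big_enum_cond /= sumr_const /typedist.
    by rewrite mulr_natl cardsE.
apply: (le_trans (y := \sum_(p <- sq) p.1 * dl1 eta p.2.1 p.2.2)).
  apply: ge_inf; last by exists sq.
  exists 0 => r [q [[q0 _ _] ->]].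
  rewrite big_seq; apply: sumr_ge0 => p pq; apply: mulr_ge0; first exact: q0.
  by apply: sumr_ge0 => c _; apply: mulr_ge0.
rewrite cost.
case: (posnP n) => [n0|npos].
  by subst n; rewrite big_ord0 mulr0 ltW.
have Np : 0 < (n%:R : R) by rewrite ltr0n.
have hpt : \sum_i \sum_c (s *+ 2) * (eta c * `|u i c|)
    <= \sum_i \sum_c (eta c * u i c ^+ 2 + s ^+ 2 * eta c).
  apply: ler_sum => i _; apply: ler_sum => c _.
  have hn : `|u i c| ^+ 2 = u i c ^+ 2 by rewrite real_normK // num_real.
  have h1 : s *+ 2 * `|u i c| <= u i c ^+ 2 + s ^+ 2.
    have := sqr_ge0 (`|u i c| - s); rewrite sqrrB hn mulr2n; lra.
  have h2 := ler_wpM2l (eta0 c) h1.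
  rewrite mulr2n in h2 *; nra.
have hS1 : \sum_(i < n) \sum_c s ^+ 2 * eta c = s ^+ 2 * n%:R.
  transitivity (\sum_(i < n) s ^+ 2).
    by apply: eq_bigr => i _; rewrite -mulr_sumr eta1 mulr1.
  by rewrite sumr_const card_ord mulr_natr.
move: hpt; under [X in X <= _]eq_bigr do rewrite -mulr_sumr.
rewrite -mulr_sumr.
under [X in _ <= X]eq_bigr do rewrite big_split.
rewrite big_split /= hS1 => hpt.
rewrite ler_pdivrMl //.
set Sd := \sum_i \sum_c eta c * `|u i c|.
set Sq := \sum_i \sum_c eta c * u i c ^+ 2.
move: hX; rewrite -/Sq => hX.
rewrite ss in hpt.
have : s *+ 2 * Sd <= s *+ 2 * (n%:R * s).
  apply: (le_trans hpt).
  have -> : s *+ 2 * (n%:R * s) = (s ^+ 2) *+ 2 * n%:R by rewrite !mulr2n; ring.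
  rewrite ss; move: hX; rewrite /Sq mulr2n; lra.
rewrite ler_pM2l //; last by rewrite mulrn_wgt0.
Qed.
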